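(* Let $0<a<D$. There exists $M>0$ such that for every bounded set $B\subset\mathbb{R}_+^3$ there exists $t_B>0$ with the following property: for every $\omega\in\Omega$ and every nonnegative global solution $(s(t),m_1(t),m_2(t))$, $t\ge0$, of the random chemostat system $$s'(t)=(D+\psi(\xi^*(\theta_t\omega)))(s_{\mathrm{in}}-\alpha s(t))-c\mu(s(t))(m_1(t)+m_2(t))+rd\,m_1(t),$$ $$m_1'(t)=m_1(t)\big(-d-\alpha(D+\psi(\xi^*(\theta_t\omega)))+g\mu(s(t))-r_1m_1(t)-r_2m_2(t)-\alpha_1\big)+\alpha_2m_2(t),$$ $$m_2'(t)=m_2(t)\big(-d+g\mu(s(t))-r_1m_1(t)-r_2m_2(t)-\alpha_2\big)+\alpha_1m_1(t)$$ with initial condition $(s(0),m_1(0),m_2(0))\in B$, one has $$g\,s(t)+c\,(m_1(t)+m_2(t))\le M\quad\text{for all } t\ge t_B.$$ In particular, the system has an absorbing set independent of $\omega$.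
   Context: $\mathbb{R}_+^3=\{(x,y,z)\in\mathbb{R}^3: x,y,z\ge0\}$. Let $\Omega$ be the set of continuous functions $\omega:\mathbb{R}\to\mathbb{R}$ with $\omega(0)=0$, with Borel $\sigma$-algebra and Wiener measure, and $\theta_t\omega(\cdot)=\omega(\cdot+t)-\omega(t)$ the Wiener shift. The Ornstein–Uhlenbeck process is $\xi^*(\theta_t\omega)=-\int_{-\infty}^0 e^{s}\,\theta_t\omega(s)\,ds$. For a constant $a>0$, $\psi(\xi)=\frac{2a}{\pi}\arctan(\xi)$. Parameters: $D>0$, $s_{\mathrm{in}}>0$, $\alpha>0$, $c>0$, $g\in(0,c]$, $r\in(0,1)$, $d>0$, $\alpha_1,\alpha_2\ge0$, $r_1,r_2\ge0$. The consumption function $\mu:[0,+\infty)\to[0,+\infty)$ is continuous, $\mu(0)=0$, $\mu(x)>0$ for $x>0$, and $\mu(x)\le1$ for all $x\ge0$. *)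

(* Defs.v *)
From Stdlib Require Import Reals Lra.
From Coquelicot Require Import Coquelicot.
Open Scope R_scope.

Definition theta (t : R) (w : R -> R) : R -> R := fun s => w (s + t) - w t.

(* Ornstein-Uhlenbeck process: xi*(omega) = - int_{-oo}^0 e^s omega(s) ds
   (improper Riemann integral, Coquelicot's total RInt_gen). *)
Definition xi_star (w : R -> R) : R :=
  - RInt_gen (fun s => exp s * w s) (Rbar_locally m_infty) (at_point 0).

Definition psi (a xi : R) : R := 2 * a / PI * atan xi.

Definition in_Omega (w : R -> R) : Prop :=
  (forall x, continuous w x) /\ w 0 = 0.

Definition chemostat_solution
  (D sin alpha c g r d al1 al2 r1 r2 a : R) (mu : R -> R) (w : R -> R)
  (s m1 m2 : R -> R) : Prop :=
  (forall t, 0 <= t -> 0 <= s t /\ 0 <= m1 t /\ 0 <= m2 t) /\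
  filterlim s (at_right 0) (locally (s 0)) /\
  filterlim m1 (at_right 0) (locally (m1 0)) /\
  filterlim m2 (at_right 0) (locally (m2 0)) /\
  (forall t, 0 < t ->
     let Dt := D + psi a (xi_star (theta t w)) in
     is_derive s t (Dt * (sin - alpha * s t) - c * mu (s t) * (m1 t + m2 t)
                    + r * d * m1 t) /\
     is_derive m1 t (m1 t * (- d - alpha * Dt + g * mu (s t) - r1 * m1 t
                             - r2 * m2 t - al1) + al2 * m2 t) /\
     is_derive m2 t (m2 t * (- d + g * mu (s t) - r1 * m1 t - r2 * m2 t - al2)
                     + al1 * m1 t)).

(* Main.v *)
Require Import Defs.
From Stdlib Require Import Reals Lra.
From Coquelicot Require Import Coquelicot.
Open Scope R_scope.
Lemma lim_lin (f g : R -> R) (x y : R) (F : (R -> Prop) -> Prop) (FF : Filter F) :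
  filterlim f F (locally x) -> filterlim g F (locally y) ->
  filterlim (fun t => f t + g t) F (locally (x + y)).
Proof. intros Hf Hg. apply (filterlim_comp_2 f g Rplus Hf Hg). apply (filterlim_plus x y). Qed.
Lemma lim_mul (f g : R -> R) (x y : R) (F : (R -> Prop) -> Prop) (FF : Filter F) :
  filterlim f F (locally x) -> filterlim g F (locally y) ->
  filterlim (fun t => f t * g t) F (locally (x * y)).
Proof. intros Hf Hg. apply (filterlim_comp_2 f g Rmult Hf Hg). apply (filterlim_mult x y). Qed.

Lemma dec_right (W dW : R -> R) :
  (forall x, 0 < x -> is_derive W x (dW x)) -> (forall x, 0 < x -> dW x <= 0) ->
  filterlim W (at_right 0) (locally (W 0)) -> forall t, 0 < t -> W t <= W 0.
Proof.
  intros Hd Hn Hl t Ht.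
  assert (Hmon : forall e, 0 < e -> e <= t -> W t <= W e).
  { intros e He Het.
    destruct (MVT_gen W e t dW) as [c0 [Hc Heq]].
    - intros x Hx. apply Hd. unfold Rmin in Hx. destruct (Rle_dec e t); lra.
    - intros x Hx. apply continuity_pt_filterlim. apply (@ex_derive_continuous R_AbsRing R_NormedModule).
      eexists. apply Hd. unfold Rmin in Hx. destruct (Rle_dec e t); lra.
    - assert (0 < c0) by (unfold Rmin in Hc; destruct (Rle_dec e t); lra).
      specialize (Hn c0 H). nra. }
  destruct (Rle_dec (W t) (W 0)) as [h|h]; [exact h|exfalso].
  assert (Hp : 0 < W t - W 0) by lra.
  specialize (Hl (ball (W 0) (mkposreal _ Hp))).
  assert (H1 : locally (W 0) (ball (W 0) (mkposreal _ Hp))) by (exists (mkposreal _ Hp); auto).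
  specialize (Hl H1). destruct Hl as [dl Hdl].
  set (y := Rmin (t/2) (dl/2)).
  assert (Hy0 : 0 < y) by (unfold y, Rmin; destruct (Rle_dec _ _); destruct dl; simpl in *; lra).
  assert (Hyt : y <= t) by (unfold y, Rmin; destruct (Rle_dec _ _); lra).
  assert (Hyd : y < dl) by (unfold y, Rmin; destruct (Rle_dec _ _); destruct dl; simpl in *; lra).
  assert (Hb : ball 0 dl y).
  { unfold ball; simpl; unfold AbsRing_ball, abs, minus, plus, opp; simpl.
    rewrite Rabs_right; lra. }
  specialize (Hdl y Hb Hy0). specialize (Hmon y Hy0 Hyt).
  unfold ball in Hdl; simpl in Hdl; unfold AbsRing_ball, abs, minus, plus, opp in Hdl; simpl in Hdl.
  apply Rabs_def2 in Hdl. lra.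
Qed.
Lemma der_W (s m1 m2 : R->R) ds dm1 dm2 g c q l x: is_derive s x ds -> is_derive m1 x dm1 -> is_derive m2 x dm2 -> is_derive (fun t => (g*s t + c*(m1 t+m2 t) - q)*exp(l*t)) x ((g*ds + c*(dm1+dm2))*exp(l*x) + (g*s x + c*(m1 x+m2 x) - q)*(l*exp(l*x))).
Proof.
intros H1 H2 H3.
assert (He : is_derive (fun t => exp (l*t)) x (l*exp(l*x))) by (auto_derive; auto; ring).
pose proof (is_derive_plus _ _ _ _ _ H2 H3) as H23.
pose proof (is_derive_scal _ _ c _ H23) as H23c.
pose proof (is_derive_scal _ _ g _ H1) as H1g.
pose proof (is_derive_plus _ _ _ _ _ H1g H23c) as HV0.
pose proof (is_derive_minus _ _ _ _ _ HV0 (is_derive_const (K:=R_AbsRing) q x)) as HV.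
pose proof (is_derive_mult _ _ x _ _ HV He (fun n m => Rmult_comm n m)) as HM.
eapply is_derive_ext in HM. 2:{ intros t. simpl. unfold mult, plus, minus, opp, zero; simpl. reflexivity. }
simpl in HM. unfold mult, plus, minus, opp, zero in HM; simpl in HM.
replace ((g*ds + c*(dm1+dm2))*exp(l*x) + (g*s x + c*(m1 x+m2 x) - q)*(l*exp(l*x))) with ((g * ds + c * (dm1 + dm2) + - 0) * exp (l * x) + (g * s x + c * (m1 x + m2 x) + - q) * (l * exp (l * x))) by ring.
exact HM.
Qed.

Lemma psi_bound (a x : R) : 0 < a -> - a < psi a x < a.
Proof.
intros Ha. unfold psi. pose proof (atan_bound x) as [h1 h2]. pose proof PI_RGT_0 as hp.
split.
- apply Rmult_lt_reg_r with PI; auto. replace (2 * a / PI * atan x * PI) with (2*a*atan x) by (field; lra). nra.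
- apply Rmult_lt_reg_r with PI; auto. replace (2 * a / PI * atan x * PI) with (2*a*atan x) by (field; lra). nra.
Qed.

Theorem theorem3p2
  (D sin alpha c g r d al1 al2 r1 r2 a : R) (mu : R -> R)
  (HD : 0 < D) (Hsin : 0 < sin) (Halpha : 0 < alpha) (Hc : 0 < c)
  (Hg : 0 < g) (Hgc : g <= c) (Hr0 : 0 < r) (Hr1 : r < 1) (Hd : 0 < d)
  (Hal1 : 0 <= al1) (Hal2 : 0 <= al2) (Hr1' : 0 <= r1) (Hr2' : 0 <= r2)
  (Ha : 0 < a) (HaD : a < D)
  (Hmu_cont : forall x, 0 <= x -> filterlim mu (at_right x) (locally (mu x))
                              /\ (0 < x -> continuous mu x))
  (Hmu0 : mu 0 = 0) (Hmu_pos : forall x, 0 < x -> 0 < mu x)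
  (Hmu_le1 : forall x, 0 <= x -> mu x <= 1) :
  exists M : R, 0 < M /\
    forall B : R -> R -> R -> Prop,
      (forall x y z, B x y z -> 0 <= x /\ 0 <= y /\ 0 <= z) ->
      (exists K : R, forall x y z, B x y z -> Rabs x + Rabs y + Rabs z <= K) ->
      exists tB : R, 0 < tB /\
        forall (w : R -> R) (s m1 m2 : R -> R),
          in_Omega w ->
          chemostat_solution D sin alpha c g r d al1 al2 r1 r2 a mu w s m1 m2 ->
          B (s 0) (m1 0) (m2 0) ->
          forall t, tB <= t -> g * s t + c * (m1 t + m2 t) <= M.
Proof.
set (l := Rmin (alpha*(D-a)) (d*(1-r))).
assert (Hl : 0 < l) by (unfold l, Rmin; destruct (Rle_dec _ _); nra).
assert (Hl1 : l <= alpha*(D-a)) by apply Rmin_l.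
assert (Hl2 : l <= d*(1-r)) by apply Rmin_r.
set (K := g*(D+a)*sin).
assert (HK : 0 < K) by (unfold K; apply Rmult_lt_0_compat; [nra|lra]).
set (q := K / l).
assert (Hq : 0 < q) by (unfold q; apply Rdiv_lt_0_compat; lra).
exists (q + 1). split; [lra|].
intros B HB [KB HKB].
exists (1 + c * Rabs KB / l). split.
{ assert (0 <= c * Rabs KB / l) by (apply Rdiv_le_0_compat; [apply Rmult_le_pos; [lra|apply Rabs_pos]|lra]). lra. }
intros w s m1 m2 _ [Hnn [Hs0 [Hm10 [Hm20 Hder]]]] HB0 t Ht.
set (W := fun t => (g*s t + c*(m1 t+m2 t) - q)*exp(l*t)).
assert (HWle : forall t, 0 < t -> W t <= W 0).
{ apply dec_right with (dW := fun x =>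
    let Dt := D + psi a (xi_star (theta x w)) in
    (g*(Dt * (sin - alpha * s x) - c * mu (s x) * (m1 x + m2 x) + r * d * m1 x)
     + c*((m1 x * (- d - alpha * Dt + g * mu (s x) - r1 * m1 x - r2 * m2 x - al1) + al2 * m2 x)
         + (m2 x * (- d + g * mu (s x) - r1 * m1 x - r2 * m2 x - al2) + al1 * m1 x)))*exp(l*x)
    + (g*s x + c*(m1 x+m2 x) - q)*(l*exp(l*x))).
  - intros x Hx. destruct (Hder x Hx) as [d1 [d2 d3]]. unfold W. apply der_W; assumption.
  - intros x Hx. cbv zeta.
    set (Dt := D + psi a (xi_star (theta x w))).
    assert (HDt : D - a < Dt < D + a) by (unfold Dt; pose proof (psi_bound a (xi_star (theta x w)) Ha); lra).
    destruct (Hnn x (Rlt_le _ _ Hx)) as [hs [hm1 hm2]].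
    set (S := s x) in *. set (X := m1 x) in *. set (Y := m2 x) in *. set (mm := mu S).
    set (E := exp (l*x)). assert (HE : 0 < E) by apply exp_pos.
    assert (Hlq : l * q = K) by (unfold q; field; lra).
    assert (e1 : Dt*g*sin <= (D+a)*g*sin) by (apply Rmult_le_compat_r; [lra| apply Rmult_le_compat_r; lra]).
    assert (e2 : l*(g*S) <= alpha*Dt*(g*S)) by (apply Rmult_le_compat_r; [nra| nra]).
    assert (e3 : 0 <= alpha*Dt*(c*X)) by (apply Rmult_le_pos; [nra| nra]).
    assert (f4a : d*g*r <= d*c*r) by (apply Rmult_le_compat_r; [lra| apply Rmult_le_compat_l; lra]).
    assert (f4b : l*c <= d*(1-r)*c) by (apply Rmult_le_compat_r; lra).
    assert (e4 : l*(c*X) <= d*(c - g*r)*X).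
    { assert (0 <= (d*(c - g*r) - l*c)*X) by (apply Rmult_le_pos; nra). nra. }
    assert (e5 : l*(c*Y) <= d*c*Y).
    { assert (l <= d) by nra. assert (0 <= (d*c - l*c)*Y) by (apply Rmult_le_pos; [nra|lra]). nra. }
    assert (e6 : 0 <= c*(r1*X+r2*Y)*(X+Y)) by (apply Rmult_le_pos; [apply Rmult_le_pos; nra|nra]).
    assert (Hkey : g*(Dt * (sin - alpha * S) - c * mm * (X + Y) + r * d * X)
     + c*((X * (- d - alpha * Dt + g * mm - r1 * X - r2 * Y - al1) + al2 * Y)
         + (Y * (- d + g * mm - r1 * X - r2 * Y - al2) + al1 * X))
     + (g*S + c*(X+Y) - q)*l <= 0).
    { unfold K in Hlq. nra. }
    replace ((g * (Dt * (sin - alpha * S) - c * mm * (X + Y) + r * d * X) +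
     c * (X * (- d - alpha * Dt + g * mm - r1 * X - r2 * Y - al1) + al2 * Y +
      (Y * (- d + g * mm - r1 * X - r2 * Y - al2) + al1 * X))) * E +
    (g * S + c * (X + Y) - q) * (l * E)) with
     ((g*(Dt * (sin - alpha * S) - c * mm * (X + Y) + r * d * X)
     + c*((X * (- d - alpha * Dt + g * mm - r1 * X - r2 * Y - al1) + al2 * Y)
         + (Y * (- d + g * mm - r1 * X - r2 * Y - al2) + al1 * X))
     + (g*S + c*(X+Y) - q)*l) * E) by ring.
    nra.
  - unfold W. apply lim_mul; [apply _| |].
    + apply lim_lin; [apply _| |]. 
      * apply lim_lin; [apply _| |].
        -- apply lim_mul; [apply _| apply filterlim_const | exact Hs0].
        -- apply lim_mul; [apply _| apply filterlim_const | ].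
           apply lim_lin; [apply _| exact Hm10 | exact Hm20].
      * apply filterlim_const.
    + apply (filterlim_filter_le_1 (F := locally 0)).
      * apply filter_le_within.
      * apply (@ex_derive_continuous R_AbsRing R_NormedModule (fun t => exp (l*t)) 0). eexists. auto_derive; auto. }
assert (Ht0 : 0 < t).
{ assert (0 <= c * Rabs KB / l) by (apply Rdiv_le_0_compat; [apply Rmult_le_pos; [lra|apply Rabs_pos]|lra]). lra. }
specialize (HWle t Ht0). unfold W in HWle. rewrite Rmult_0_r, exp_0, Rmult_1_r in HWle.
destruct (HB _ _ _ HB0) as [h0 [h1 h2]].
specialize (HKB _ _ _ HB0). rewrite !Rabs_pos_eq in HKB by lra.
assert (HV0 : g * s 0 + c * (m1 0 + m2 0) <= c * Rabs KB).
{ pose proof (Rle_abs KB). nra. }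
assert (HE : 1 + l*t < exp (l*t)) by (apply exp_ineq1; nra).
assert (Htl : c * Rabs KB <= l * t).
{ assert (l * (1 + c * Rabs KB / l) = l + c * Rabs KB) by (field; lra). nra. }
destruct (Rle_dec (g * s t + c * (m1 t + m2 t)) (q+1)) as [h|h]; [exact h|exfalso].
apply Rnot_le_lt in h.
assert (0 < (g * s t + c * (m1 t + m2 t) - q - 1) * exp (l*t)) by (apply Rmult_lt_0_compat; [lra|apply exp_pos]).
nra.
Qed.
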